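(* Let $\rho_1,\rho_2,H_1,H_2,g>0$ with $\rho_1<\rho_2$, and let $l\neq 0$. Consider the system for two smooth functions $\psi_1(t,x,y),\psi_2(t,x,y)$: $$\frac{\partial \omega_i}{\partial t}+[\omega_i,\psi_i]=0,\qquad i=1,2,$$ where $\omega_i=\Delta\psi_i+\epsilon_i(\psi_2-\alpha_i\psi_1)$, $\alpha_1=1$, $\alpha_2=\rho_1/\rho_2$, $\epsilon_i=\dfrac{l^2\rho_i}{(\rho_2-\rho_1)gH_i}$. Then the Lie algebra of (infinitesimal) Lie point symmetries of this system is the seven-dimensional algebra spanned by $$X_1=\partial_x,\ X_2=\partial_y,\ X_3=\partial_t,\ X_4=\partial_{\psi_1},\ X_5=\partial_{\psi_2},\ X_6=y\partial_x-x\partial_y,\ X_7=t\partial_t-\psi_1\partial_{\psi_1}-\psi_2\partial_{\psi_2}.$$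
   Context: $\Delta=\partial_x^2+\partial_y^2$ is the horizontal Laplacian and $[a,b]=\frac{\partial a}{\partial x}\frac{\partial b}{\partial y}-\frac{\partial a}{\partial y}\frac{\partial b}{\partial x}$ is the Jacobian bracket. A Lie point symmetry is a vector field $\xi^t\partial_t+\xi^x\partial_x+\xi^y\partial_y+\eta^1\partial_{\psi_1}+\eta^2\partial_{\psi_2}$ on the space $(t,x,y,\psi_1,\psi_2)$ whose prolongation annihilates the equations on their solution set (infinitesimal invariance criterion). *)

(* Defs.v *)
From Stdlib Require Import Reals Lra List Bool ClassicalEpsilon.
Import ListNotations.
Open Scope R_scope.

(** The derivative of a real function at a point, when it exists (else 0). *)
Definition dlim (f : R -> R) (x : R) : R :=
  match excluded_middle_informative (exists l, derivable_pt_lim f x l) with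
  | left H => proj1_sig (constructive_indefinite_description _ H)
  | right _ => 0
  end.

(** * Smooth functions on R^5 (coordinates t, x, y, psi1, psi2) *)
Definition R5fun := R -> R -> R -> R -> R -> R.

Definition upd (q : nat -> R) (k : nat) (s : R) : nat -> R :=
  fun j => if Nat.eqb j k then s else q j.

Definition lift5 (f : R5fun) : (nat -> R) -> R :=
  fun q => f (q 0%nat) (q 1%nat) (q 2%nat) (q 3%nat) (q 4%nat).

Definition PDv (G : (nat -> R) -> R) (k : nat) (q : nat -> R) : R :=
  dlim (fun s => G (upd q k s)) (q k).

Fixpoint iterPDv (G : (nat -> R) -> R) (ks : list nat) : (nat -> R) -> R :=
  match ks with
  | [] => G
  | k :: ks' => PDv (iterPDv G ks') k
  end.

Definition cont5 (G : (nat -> R) -> R) : Prop :=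
  forall q eps, 0 < eps -> exists delta, 0 < delta /\
    forall q', (forall i, (i < 5)%nat -> Rabs (q' i - q i) < delta) ->
      Rabs (G q' - G q) < eps.

Definition Smooth5 (f : R5fun) : Prop :=
  forall ks, Forall (fun k => (k < 5)%nat) ks ->
    (forall k q, (k < 5)%nat ->
       exists l, derivable_pt_lim (fun s => iterPDv (lift5 f) ks (upd q k s)) (q k) l)
    /\ cont5 (iterPDv (lift5 f) ks).

Record VF := mkVF { xi_t : R5fun; xi_x : R5fun; xi_y : R5fun;
                    eta1 : R5fun; eta2 : R5fun }.

Definition SmoothVF (V : VF) : Prop :=
  Smooth5 (xi_t V) /\ Smooth5 (xi_x V) /\ Smooth5 (xi_y V) /\
  Smooth5 (eta1 V) /\ Smooth5 (eta2 V).

Definition c0 : R5fun := fun _ _ _ _ _ => 0.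
Definition c1 : R5fun := fun _ _ _ _ _ => 1.
Definition X1 : VF := mkVF c0 c1 c0 c0 c0.
Definition X2 : VF := mkVF c0 c0 c1 c0 c0.
Definition X3 : VF := mkVF c1 c0 c0 c0 c0.
Definition X4 : VF := mkVF c0 c0 c0 c1 c0.
Definition X5 : VF := mkVF c0 c0 c0 c0 c1.
Definition X6 : VF := mkVF c0 (fun t x y p1 p2 => y) (fun t x y p1 p2 => - x) c0 c0.
Definition X7 : VF := mkVF (fun t x y p1 p2 => t) c0 c0
                           (fun t x y p1 p2 => - p1) (fun t x y p1 p2 => - p2).

Definition Xs : list VF := [X1; X2; X3; X4; X5; X6; X7].

Definition IsLinComb (V : VF) (c : list R) : Prop :=
  length c = 7%nat /\
  forall t x y p1 p2,
    let comb (sel : VF -> R5fun) :=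
        fold_right Rplus 0 (map (fun '(ck, Xk) => ck * sel Xk t x y p1 p2) (combine c Xs)) in
    xi_t V t x y p1 p2 = comb xi_t /\ xi_x V t x y p1 p2 = comb xi_x /\
    xi_y V t x y p1 p2 = comb xi_y /\ eta1 V t x y p1 p2 = comb eta1 /\
    eta2 V t x y p1 p2 = comb eta2.

Definition InSpanX (V : VF) : Prop := exists c, IsLinComb V c.

Definition zeroVF : VF := mkVF c0 c0 c0 c0 c0.

Definition XsLinIndep : Prop :=
  forall c, IsLinComb zeroVF c -> Forall (fun ck => ck = 0) c.

(** * Jet space J^4 over (t,x,y) with dependent variables psi1 (a=0), psi2 (a=1).
    Multi-index (n0,n1,n2) = numbers of derivatives in t, x, y. *)
Definition MI := (nat * nat * nat)%type.
Record JP := mkJP { jb : nat -> R ;            (* 0 = t, 1 = x, 2 = y *)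
                    ju : nat -> MI -> R }.     (* ju a J = d^J psi_(a+1) *)

Definition mi_eqb (J K : MI) : bool :=
  let '(a,b,c) := J in let '(a',b',c') := K in
  (Nat.eqb a a' && Nat.eqb b b' && Nat.eqb c c')%bool.
Definition mi_add (J K : MI) : MI :=
  let '(a,b,c) := J in let '(a',b',c') := K in (a+a', b+b', c+c')%nat.
Definition ei (i : nat) : MI :=
  match i with 0 => (1,0,0) | 1 => (0,1,0) | _ => (0,0,1) end%nat.
Definition addi (J : MI) (i : nat) : MI := mi_add J (ei i).

Definition mi_upto (n : nat) : list MI :=
  flat_map (fun n0 => flat_map (fun n1 =>
     map (fun n2 => (n0,n1,n2)) (seq 0 (S (n - n0 - n1)))) (seq 0 (S (n - n0))))
   (seq 0 (S n)).

Definition sumL {A} (l : list A) (f : A -> R) : R := fold_right (fun a s => f a + s) 0 l.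

Definition setb (p : JP) (i : nat) (s : R) : JP :=
  mkJP (fun j => if Nat.eqb j i then s else jb p j) (ju p).
Definition setu (p : JP) (a : nat) (J : MI) (s : R) : JP :=
  mkJP (jb p) (fun a' J' => if (Nat.eqb a' a && mi_eqb J' J)%bool then s else ju p a' J').

Definition PDb (F : JP -> R) (i : nat) (p : JP) : R :=
  dlim (fun s => F (setb p i s)) (jb p i).
Definition PDu (F : JP -> R) (a : nat) (J : MI) (p : JP) : R :=
  dlim (fun s => F (setu p a J s)) (ju p a J).

(** total derivative D_i (exact on differential functions of order <= 3) *)
Definition TD (i : nat) (F : JP -> R) : JP -> R := fun p =>
  PDb F i p + sumL [0;1]%nat (fun a => sumL (mi_upto 3) (fun J =>
                  ju p a (addi J i) * PDu F a J p)).

Definition TDJ (J : MI) (F : JP -> R) : JP -> R :=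
  let '(n0,n1,n2) := J in
  Nat.iter n0 (TD 0) (Nat.iter n1 (TD 1) (Nat.iter n2 (TD 2) F)).

Definition liftJ (f : R5fun) : JP -> R := fun p =>
  f (jb p 0) (jb p 1) (jb p 2) (ju p 0 (0,0,0)%nat) (ju p 1 (0,0,0)%nat).

Definition xiJ (V : VF) (i : nat) : JP -> R :=
  liftJ (match i with 0 => xi_t V | 1 => xi_x V | _ => xi_y V end)%nat.
Definition etaJ (V : VF) (a : nat) : JP -> R :=
  liftJ (match a with 0 => eta1 V | _ => eta2 V end)%nat.

Definition Qchar (V : VF) (a : nat) : JP -> R := fun p =>
  etaJ V a p - sumL [0;1;2]%nat (fun i => xiJ V i p * ju p a (ei i)).

Definition prolcoef (V : VF) (a : nat) (J : MI) : JP -> R := fun p =>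
  TDJ J (Qchar V a) p + sumL [0;1;2]%nat (fun i => xiJ V i p * ju p a (addi J i)).

Definition prV (V : VF) (F : JP -> R) : JP -> R := fun p =>
  sumL [0;1;2]%nat (fun i => xiJ V i p * PDb F i p) +
  sumL [0;1]%nat (fun a => sumL (mi_upto 3) (fun J => prolcoef V a J p * PDu F a J p)).

Definition epsi (rho1 rho2 g l rhoi Hi : R) : R :=
  l ^ 2 * rhoi / ((rho2 - rho1) * g * Hi).

Definition omegaD (eps alpha : R) (a : nat) (J0 : MI) (p : JP) : R :=
  ju p a (mi_add J0 (0,2,0)%nat) + ju p a (mi_add J0 (0,0,2)%nat)
  + eps * (ju p 1 J0 - alpha * ju p 0 J0).

(** omega_t + [omega, psi] with [a,b] = a_x b_y - a_y b_x *)
Definition EqA (eps alpha : R) (a : nat) (p : JP) : R :=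
  omegaD eps alpha a (1,0,0)%nat p
  + omegaD eps alpha a (0,1,0)%nat p * ju p a (0,0,1)%nat
  - omegaD eps alpha a (0,0,1)%nat p * ju p a (0,1,0)%nat.

Definition Eq1 (rho1 rho2 H1 H2 g l : R) : JP -> R :=
  EqA (epsi rho1 rho2 g l rho1 H1) 1 0.
Definition Eq2 (rho1 rho2 H1 H2 g l : R) : JP -> R :=
  EqA (epsi rho1 rho2 g l rho2 H2) (rho1 / rho2) 1.

Definition IsLieSym (rho1 rho2 H1 H2 g l : R) (V : VF) : Prop :=
  forall p, Eq1 rho1 rho2 H1 H2 g l p = 0 -> Eq2 rho1 rho2 H1 H2 g l p = 0 ->
    prV V (Eq1 rho1 rho2 H1 H2 g l) p = 0 /\ prV V (Eq2 rho1 rho2 H1 H2 g l) p = 0.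

(* Main.v *)
Require Import Defs.
From Stdlib Require Import Reals List Lra Lia FunctionalExtensionality ClassicalEpsilon.
Import ListNotations.
Open Scope R_scope.


Lemma dlim_eq f x l : derivable_pt_lim f x l -> dlim f x = l.
Proof.
  intro H. unfold dlim. destruct excluded_middle_informative as [e|n].
  - destruct (constructive_indefinite_description _ e) as [l' Hl']. simpl.
    eapply uniqueness_limite; eauto.
  - exfalso; apply n; eauto.
Qed.

Lemma dpl_eq f x l l' : derivable_pt_lim f x l -> l = l' -> derivable_pt_lim f x l'.
Proof. intros H ->; exact H. Qed.

Lemma dpl_const_fun (f : R -> R) x c : (forall s, f s = c) -> derivable_pt_lim f x 0.
Proof.
  intro H. replace f with (fun _ : R => c) by (extensionality s; auto).
  apply derivable_pt_lim_const.
Qed.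

Lemma dpl_plus' (f g : R -> R) x l1 l2 :
  derivable_pt_lim f x l1 -> derivable_pt_lim g x l2 ->
  derivable_pt_lim (fun s => f s + g s) x (l1 + l2).
Proof. intros; apply (derivable_pt_lim_plus f g); auto. Qed.

Lemma dpl_mult' (f g : R -> R) x l1 l2 :
  derivable_pt_lim f x l1 -> derivable_pt_lim g x l2 ->
  derivable_pt_lim (fun s => f s * g s) x (l1 * g x + f x * l2).
Proof. intros; apply (derivable_pt_lim_mult f g); auto. Qed.

Definition vec5 (t x y u v : R) : nat -> R :=
  fun i => match i with 0 => t | 1 => x | 2 => y | 3 => u | _ => v end%nat.

Definition Dk (k : nat) (f : R5fun) : R5fun :=
  if Nat.ltb k 5 then fun t x y u v => PDv (lift5 f) k (vec5 t x y u v) else c0.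

Arguments Dk : simpl never.

Fixpoint Dks (K : list nat) (f : R5fun) : R5fun :=
  match K with [] => f | k :: K' => Dk k (Dks K' f) end.

Definition dep5 (G : (nat -> R) -> R) : Prop :=
  forall q q', (forall i, (i < 5)%nat -> q i = q' i) -> G q = G q'.

Lemma dep5_lift5 f : dep5 (lift5 f).
Proof. intros q q' H. unfold lift5. rewrite !H by lia. reflexivity. Qed.

Lemma dep5_PDv G k : dep5 G -> (k < 5)%nat -> dep5 (PDv G k).
Proof.
  intros HG Hk q q' H. unfold PDv. rewrite (H k Hk).
  f_equal. extensionality s. apply HG. intros i Hi. unfold upd.
  destruct (Nat.eqb i k); auto.
Qed.

Lemma dep5_iter G ks : dep5 G -> Forall (fun k => (k < 5)%nat) ks -> dep5 (iterPDv G ks).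
Proof.
  intros HG; induction ks as [|k ks IH]; intros Hks; simpl; auto.
  inversion Hks; subst. apply dep5_PDv; auto.
Qed.

Lemma vec5_agree q : forall i, (i < 5)%nat -> vec5 (q 0%nat) (q 1%nat) (q 2%nat) (q 3%nat) (q 4%nat) i = q i.
Proof.
  intros i Hi. destruct i as [|[|[|[|[|i]]]]]; simpl; auto. lia.
Qed.

Lemma iter_Dk f k ks : (k < 5)%nat -> Forall (fun k => (k < 5)%nat) ks ->
  iterPDv (lift5 (Dk k f)) ks = iterPDv (lift5 f) (ks ++ [k]).
Proof.
  intros Hk. induction ks as [|k' ks IH]; intros Hks; simpl.
  - extensionality q. unfold lift5 at 1. unfold Dk. destruct (Nat.ltb_spec k 5); [|lia].
    apply dep5_PDv; [apply dep5_lift5|auto|]. apply vec5_agree.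
  - inversion Hks; subst. rewrite IH; auto.
Qed.

Lemma iter_c0 ks : iterPDv (lift5 c0) ks = fun _ => 0.
Proof.
  induction ks as [|k ks IH]; simpl.
  - extensionality q. reflexivity.
  - rewrite IH. extensionality q. unfold PDv. apply dlim_eq. apply derivable_pt_lim_const.
Qed.

Lemma smooth_c0 : Smooth5 c0.
Proof.
  intros ks Hks. rewrite iter_c0. split.
  - intros k q Hk. exists 0. apply derivable_pt_lim_const.
  - intros q eps Heps. exists 1. split; [lra|]. intros. rewrite Rminus_diag, Rabs_R0. auto.
Qed.

Lemma smooth_Dk f k : Smooth5 f -> Smooth5 (Dk k f).
Proof.
  intros Hf. destruct (Nat.ltb_spec k 5) as [Hk|Hk].
  - intros ks Hks. rewrite iter_Dk by auto. apply Hf.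
    apply Forall_app; split; auto.
  - unfold Dk. replace (Nat.ltb k 5) with false by (symmetry; apply Nat.ltb_ge; lia).
    apply smooth_c0.
Qed.

Lemma smooth_Dks f K : Smooth5 f -> Smooth5 (Dks K f).
Proof. intros Hf; induction K; simpl; auto using smooth_Dk. Qed.

Lemma sm_deriv f k q : Smooth5 f -> (k < 5)%nat ->
  derivable_pt_lim (fun s => lift5 f (upd q k s)) (q k) (lift5 (Dk k f) q).
Proof.
  intros Hf Hk. destruct (proj1 (Hf [] (Forall_nil _)) k q Hk) as [l Hl]. simpl in Hl.
  apply (dpl_eq _ _ _ _ Hl).
  change (lift5 (Dk k f) q) with (Dk k f (q 0%nat) (q 1%nat) (q 2%nat) (q 3%nat) (q 4%nat)).
  unfold Dk. destruct (Nat.ltb_spec k 5); [|lia].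
  rewrite (dep5_PDv (lift5 f) k (dep5_lift5 f) Hk _ q (vec5_agree q)).
  unfold PDv. symmetry. apply dlim_eq. exact Hl.
Qed.

Section Coord.
Variable f : R5fun.
Hypothesis Hf : Smooth5 f.
Lemma sm_d0 t x y u v : derivable_pt_lim (fun s => f s x y u v) t (Dk 0 f t x y u v).
Proof. exact (sm_deriv f 0 (vec5 t x y u v) Hf ltac:(lia)). Qed.
Lemma sm_d1 t x y u v : derivable_pt_lim (fun s => f t s y u v) x (Dk 1 f t x y u v).
Proof. exact (sm_deriv f 1 (vec5 t x y u v) Hf ltac:(lia)). Qed.
Lemma sm_d2 t x y u v : derivable_pt_lim (fun s => f t x s u v) y (Dk 2 f t x y u v).
Proof. exact (sm_deriv f 2 (vec5 t x y u v) Hf ltac:(lia)). Qed.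
Lemma sm_d3 t x y u v : derivable_pt_lim (fun s => f t x y s v) u (Dk 3 f t x y u v).
Proof. exact (sm_deriv f 3 (vec5 t x y u v) Hf ltac:(lia)). Qed.
Lemma sm_d4 t x y u v : derivable_pt_lim (fun s => f t x y u s) v (Dk 4 f t x y u v).
Proof. exact (sm_deriv f 4 (vec5 t x y u v) Hf ltac:(lia)). Qed.
End Coord.


Inductive JE :=
| JZ | JR (r : R) | JC (c : nat) (K : list nat) | JV (a : nat) (J : MI)
| JA (e1 e2 : JE) | JM (e1 e2 : JE).

Notation Z0 := ((0,0,0)%nat : MI).

Fixpoint ev (env : nat -> R5fun) (e : JE) (p : JP) : R :=
  match e with
  | JZ => 0
  | JR r => r
  | JC c K => Dks K (env c) (jb p 0) (jb p 1) (jb p 2) (ju p 0 Z0) (ju p 1 Z0)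
  | JV a J => ju p a J
  | JA e1 e2 => ev env e1 p + ev env e2 p
  | JM e1 e2 => ev env e1 p * ev env e2 p
  end.

Definition mkA (e1 e2 : JE) : JE :=
  match e1 with JZ => e2 | _ => match e2 with JZ => e1 | _ => JA e1 e2 end end.
Definition mkM (e1 e2 : JE) : JE :=
  match e1 with JZ => JZ | _ => match e2 with JZ => JZ | _ => JM e1 e2 end end.

Lemma ev_mkA env e1 e2 p : ev env (mkA e1 e2) p = ev env e1 p + ev env e2 p.
Proof. destruct e1, e2; simpl; ring. Qed.
Lemma ev_mkM env e1 e2 p : ev env (mkM e1 e2) p = ev env e1 p * ev env e2 p.
Proof. destruct e1, e2; simpl; ring. Qed.

Fixpoint dB (i : nat) (e : JE) : JE :=
  match e with
  | JZ | JR _ | JV _ _ => JZ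
  | JC c K => JC c (i :: K)
  | JA e1 e2 => mkA (dB i e1) (dB i e2)
  | JM e1 e2 => mkA (mkM (dB i e1) e2) (mkM e1 (dB i e2))
  end.

Fixpoint dU (a : nat) (J : MI) (e : JE) : JE :=
  match e with
  | JZ | JR _ => JZ
  | JC c K => if mi_eqb J Z0 then
                match a with 0 => JC c (3 :: K) | 1 => JC c (4 :: K) | _ => JZ end%nat
              else JZ
  | JV a' J' => if (Nat.eqb a' a && mi_eqb J' J)%bool then JR 1 else JZ
  | JA e1 e2 => mkA (dU a J e1) (dU a J e2)
  | JM e1 e2 => mkA (mkM (dU a J e1) e2) (mkM e1 (dU a J e2))
  end.

Lemma mi_eqb_spec J K : mi_eqb J K = true <-> J = K.
Proof.
  destruct J as [[a b] c], K as [[a' b'] c']; simpl.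
  rewrite !Bool.andb_true_iff, !Nat.eqb_eq. split.
  - intros [[-> ->] ->]; auto.
  - intro H; inversion H; auto.
Qed.

Lemma mi_eqb_sym J K : mi_eqb J K = mi_eqb K J.
Proof.
  destruct J as [[a b] c], K as [[a' b'] c']; simpl.
  rewrite (Nat.eqb_sym a), (Nat.eqb_sym b), (Nat.eqb_sym c); auto.
Qed.

Lemma setb_same p i : setb p i (jb p i) = p.
Proof.
  destruct p as [b u]; unfold setb; simpl. f_equal. extensionality j.
  destruct (Nat.eqb_spec j i); subst; auto.
Qed.

Lemma setu_same p a J : setu p a J (ju p a J) = p.
Proof.
  destruct p as [b u]; unfold setu; simpl. f_equal. extensionality a'. extensionality J'.
  destruct (Nat.eqb_spec a' a); simpl; auto.
  destruct (mi_eqb J' J) eqn:E; auto. apply mi_eqb_spec in E. subst; auto.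
Qed.

Definition envOK (env : nat -> R5fun) := forall c, Smooth5 (env c).

Lemma dB_deriv env e i p : envOK env -> (i < 3)%nat ->
  derivable_pt_lim (fun s => ev env e (setb p i s)) (jb p i) (ev env (dB i e) p).
Proof.
  intros Henv Hi. induction e; simpl.
  - apply (dpl_const_fun _ _ 0); auto.
  - apply (dpl_const_fun _ _ r); auto.
  - pose proof (smooth_Dks (env c) K (Henv c)) as Hs.
    destruct i as [|[|[|i]]]; [| | |lia]; simpl.
    + apply (sm_d0 _ Hs).
    + apply (sm_d1 _ Hs).
    + apply (sm_d2 _ Hs).
  - apply (dpl_const_fun _ _ (ju p a J)); auto.
  - eapply dpl_eq. apply dpl_plus'; eauto. rewrite ev_mkA; auto.
  - eapply dpl_eq. apply dpl_mult'; eauto.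
    rewrite ev_mkA, !ev_mkM, setb_same. ring.
Qed.

Lemma setu_ne p a J s a' J' : ~ (a' = a /\ J' = J) -> ju (setu p a J s) a' J' = ju p a' J'.
Proof.
  intro H. unfold setu; simpl. destruct (Nat.eqb_spec a' a); simpl; auto.
  destruct (mi_eqb J' J) eqn:E; auto. apply mi_eqb_spec in E. tauto.
Qed.

Lemma dU_deriv env e a J p : envOK env -> (a < 2)%nat ->
  derivable_pt_lim (fun s => ev env e (setu p a J s)) (ju p a J) (ev env (dU a J e) p).
Proof.
  intros Henv Ha. induction e; cbn [ev dU].
  - apply (dpl_const_fun _ _ 0); auto.
  - apply (dpl_const_fun _ _ r); auto.
  - pose proof (smooth_Dks (env c) K (Henv c)) as Hs.
    destruct (mi_eqb J Z0) eqn:EJ.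
    + apply mi_eqb_spec in EJ; subst J.
      destruct a as [|[|a]]; [| |lia]; simpl.
      * apply (sm_d3 _ Hs).
      * apply (sm_d4 _ Hs).
    + apply (dpl_const_fun _ _ (Dks K (env c) (jb p 0) (jb p 1) (jb p 2) (ju p 0 Z0) (ju p 1 Z0))).
      intro s. assert (J <> Z0) by (intro; subst; simpl in EJ; discriminate).
      rewrite !setu_ne by (intros [? ?]; congruence). reflexivity.
  - destruct (Nat.eqb a0 a && mi_eqb J0 J)%bool eqn:E; simpl.
    + apply Bool.andb_true_iff in E. destruct E as [E1 E2].
      apply Nat.eqb_eq in E1. apply mi_eqb_spec in E2. subst.
      rewrite Nat.eqb_refl. replace (mi_eqb J J) with true by (symmetry; apply mi_eqb_spec; auto).
      simpl. apply derivable_pt_lim_id.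
    + apply (dpl_const_fun _ _ (ju p a0 J0)). intro s. simpl. rewrite E. reflexivity.
  - eapply dpl_eq. apply dpl_plus'; eauto. rewrite ev_mkA; auto.
  - eapply dpl_eq. apply dpl_mult'; eauto.
    rewrite ev_mkA, !ev_mkM, setu_same. ring.
Qed.

Lemma PDb_ev env e i p : envOK env -> (i < 3)%nat -> PDb (ev env e) i p = ev env (dB i e) p.
Proof. intros. unfold PDb. apply dlim_eq. apply dB_deriv; auto. Qed.

Lemma PDu_ev env e a J p : envOK env -> (a < 2)%nat -> PDu (ev env e) a J p = ev env (dU a J e) p.
Proof. intros. unfold PDu. apply dlim_eq. apply dU_deriv; auto. Qed.

Definition sumE {A} (l : list A) (f : A -> JE) : JE := fold_right (fun x acc => mkA (f x) acc) JZ l.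

Lemma ev_sumE {A} env (l : list A) f p : ev env (sumE l f) p = sumL l (fun x => ev env (f x) p).
Proof. induction l; simpl; auto. rewrite ev_mkA, IHl; auto. Qed.

Lemma sumL_ext {A} (l : list A) f g : (forall x, f x = g x) -> sumL l f = sumL l g.
Proof. intros H; induction l; simpl; auto. rewrite H, IHl; auto. Qed.

Lemma sumL_ext_in {A} (l : list A) f g : (forall x, In x l -> f x = g x) -> sumL l f = sumL l g.
Proof. intros H; induction l; simpl; auto. rewrite H, IHl; auto. intros; apply H; simpl; auto. simpl; auto. Qed.

Definition tdE (i : nat) (e : JE) : JE :=
  mkA (dB i e) (sumE [0;1]%nat (fun a => sumE (mi_upto 3) (fun J => mkM (JV a (addi J i)) (dU a J e)))).

Lemma ev_tdE env e i p : envOK env -> (i < 3)%nat -> ev env (tdE i e) p = TD i (ev env e) p.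
Proof.
  intros Henv Hi. unfold tdE, TD. rewrite ev_mkA, PDb_ev by auto. f_equal.
  rewrite ev_sumE. apply sumL_ext_in. intros a Ha. rewrite ev_sumE. apply sumL_ext. intro J.
  rewrite ev_mkM, PDu_ev; auto. simpl in Ha. destruct Ha as [<-|[<-|[]]]; lia.
Qed.

Lemma iter_tdE env e i n : envOK env -> (i < 3)%nat ->
  ev env (Nat.iter n (tdE i) e) = Nat.iter n (TD i) (ev env e).
Proof.
  intros Henv Hi. induction n; simpl; auto.
  rewrite <- IHn. extensionality p. apply ev_tdE; auto.
Qed.

Definition tdJE (J : MI) (e : JE) : JE :=
  let '(n0,n1,n2) := J in Nat.iter n0 (tdE 0) (Nat.iter n1 (tdE 1) (Nat.iter n2 (tdE 2) e)).

Lemma ev_tdJE env e J : envOK env -> ev env (tdJE J e) = TDJ J (ev env e).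
Proof.
  intros Henv. destruct J as [[n0 n1] n2]. simpl.
  rewrite !iter_tdE by (auto; lia). reflexivity.
Qed.


Definition envV (V : VF) (c : nat) : R5fun :=
  match c with 0 => xi_t V | 1 => xi_x V | 2 => xi_y V | 3 => eta1 V | 4 => eta2 V | _ => c0 end%nat.

Lemma envV_OK V : SmoothVF V -> envOK (envV V).
Proof.
  intros (H1&H2&H3&H4&H5) c. destruct c as [|[|[|[|[|c]]]]]; simpl; auto using smooth_c0.
Qed.

Definition QE (a : nat) : JE :=
  JA (JC (3 + a) []) (JM (JR (-1)) (JA (JM (JC 0 []) (JV a (ei 0)))
      (JA (JM (JC 1 []) (JV a (ei 1))) (JA (JM (JC 2 []) (JV a (ei 2))) JZ)))).

Lemma ev_QE V a : (a < 2)%nat -> ev (envV V) (QE a) = Qchar V a.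
Proof.
  intros Ha. extensionality p. destruct a as [|[|a]]; [| |lia];
  unfold Qchar, etaJ, xiJ, liftJ, sumL; simpl; ring.
Qed.

Definition prolE (a : nat) (J : MI) : JE :=
  mkA (tdJE J (QE a)) (sumE [0;1;2]%nat (fun i => mkM (JC i []) (JV a (addi J i)))).

Lemma ev_prolE V a J p : SmoothVF V -> (a < 2)%nat -> ev (envV V) (prolE a J) p = prolcoef V a J p.
Proof.
  intros HV Ha. unfold prolE, prolcoef. rewrite ev_mkA, ev_sumE.
  rewrite ev_tdJE by (apply envV_OK; auto). rewrite ev_QE by auto. f_equal.
  all: try (unfold sumL; simpl; rewrite !ev_mkM; unfold xiJ, liftJ; simpl; ring).
Qed.

Definition prVE (eqE : JE) : JE :=
  mkA (sumE [0;1;2]%nat (fun i => mkM (JC i []) (dB i eqE)))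
      (sumE [0;1]%nat (fun a => sumE (mi_upto 3) (fun J => mkM (prolE a J) (dU a J eqE)))).

Lemma ev_prVE V eqE p : SmoothVF V -> ev (envV V) (prVE eqE) p = prV V (ev (envV V) eqE) p.
Proof.
  intros HV. pose proof (envV_OK V HV) as Henv. unfold prVE, prV. rewrite ev_mkA, !ev_sumE. f_equal.
  - apply sumL_ext_in. intros i Hi. rewrite ev_mkM, PDb_ev; auto.
    + simpl in Hi. destruct Hi as [<-|[<-|[<-|[]]]]; reflexivity.
    + simpl in Hi. destruct Hi as [<-|[<-|[<-|[]]]]; lia.
  - apply sumL_ext_in. intros a Ha. assert (a < 2)%nat by (simpl in Ha; destruct Ha as [<-|[<-|[]]]; lia).
    rewrite ev_sumE. apply sumL_ext. intro J. rewrite ev_mkM, PDu_ev, ev_prolE; auto.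
Qed.

Definition omegaDE (eps alpha : R) (a : nat) (J0 : MI) : JE :=
  JA (JA (JV a (mi_add J0 (0,2,0)%nat)) (JV a (mi_add J0 (0,0,2)%nat)))
     (JM (JR eps) (JA (JV 1 J0) (JM (JR (-1)) (JM (JR alpha) (JV 0 J0))))).

Definition EqAE (eps alpha : R) (a : nat) : JE :=
  JA (JA (omegaDE eps alpha a (1,0,0)%nat) (JM (omegaDE eps alpha a (0,1,0)%nat) (JV a (0,0,1)%nat)))
     (JM (JR (-1)) (JM (omegaDE eps alpha a (0,0,1)%nat) (JV a (0,1,0)%nat))).

Lemma ev_EqAE env eps alpha a : ev env (EqAE eps alpha a) = EqA eps alpha a.
Proof. extensionality p. unfold EqA, omegaD. simpl. ring. Qed.

Fixpoint lk (l : list (nat * MI * R)) (a : nat) (J : MI) : option R :=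
  match l with
  | [] => None
  | (a', J', r) :: l' => if (Nat.eqb a a' && mi_eqb J J')%bool then Some r else lk l' a J
  end.

Fixpoint substV (s : nat -> MI -> option R) (e : JE) : JE :=
  match e with
  | JV a J => match s a J with None => JZ | Some r => JR r end
  | JA e1 e2 => mkA (substV s e1) (substV s e2)
  | JM e1 e2 => mkM (substV s e1) (substV s e2)
  | _ => e
  end.

Definition ptS (t x y : R) (s : nat -> MI -> option R) : JP :=
  mkJP (fun j => match j with 0 => t | 1 => x | _ => y end%nat)
       (fun a J => match s a J with None => 0 | Some r => r end).

Lemma ev_substV env s e t x y : ev env (substV s e) (ptS t x y s) = ev env e (ptS t x y s).
Proof.
  induction e; simpl; auto.
  - destruct (s a J); reflexivity.
  - rewrite ev_mkA; simpl; congruence.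
  - rewrite ev_mkM; simpl; congruence.
Qed.


Definition SymCond (env : nat -> R5fun) (e1 e2 al : R) : Prop :=
  forall p, ev env (EqAE e1 1 0) p = 0 -> ev env (EqAE e2 al 1) p = 0 ->
    ev env (prVE (EqAE e1 1 0)) p = 0 /\ ev env (prVE (EqAE e2 al 1)) p = 0.

Lemma at_point env e1 e2 al l t x y : SymCond env e1 e2 al ->
  ev env (substV (lk l) (EqAE e1 1 0)) (ptS t x y (lk l)) = 0 ->
  ev env (substV (lk l) (EqAE e2 al 1)) (ptS t x y (lk l)) = 0 ->
  ev env (substV (lk l) (prVE (EqAE e1 1 0))) (ptS t x y (lk l)) = 0 /\
  ev env (substV (lk l) (prVE (EqAE e2 al 1))) (ptS t x y (lk l)) = 0.
Proof. intros HS H1 H2. rewrite !ev_substV in *. apply HS; auto. Qed.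

Definition E (a n0 n1 n2 : nat) (r : R) : nat * MI * R := (a, (n0, n1, n2), r).

Ltac normE :=
  repeat match goal with
  | |- context [substV ?s ?e] =>
      let X := fresh "X" in remember (substV s e) as X eqn:HX; vm_compute in HX; subst X
  end; cbn [ev ptS jb ju lk mi_eqb Nat.eqb andb mi_add E].

Ltac normH H :=
  repeat match type of H with
  | context [substV ?s ?e] =>
      let X := fresh "X" in remember (substV s e) as X eqn:HX in H; vm_compute in HX; subst X
  end; cbn [ev ptS jb ju lk mi_eqb Nat.eqb andb mi_add E] in H.

Ltac getpt HS l t x y H1 H2 :=
  let h := fresh in
  assert (h := at_point _ _ _ _ l t x y HS);
  destruct h as [H1 H2]; [ normE; ring | normE; ring | normH H1; normH H2 ].

Section Test.
Variable V : VF.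
Let env := envV V.
Variables e1 e2 al : R.
Hypothesis HS : SymCond env e1 e2 al.
Lemma test t x y u v : Dks [1%nat] (env 0%nat) t x y u v = 0.
Proof.
  getpt HS [E 0 0 0 0 u; E 1 0 0 0 v; E 0 2 1 0 1] t x y H1 H2.
  getpt HS [E 0 0 0 0 u; E 1 0 0 0 v] t x y H3 H4.

  lra.
Qed.
End Test.


Definition indep (k : nat) (f : R5fun) : Prop :=
  forall q s, lift5 f (upd q k s) = lift5 f q.

Lemma upd_upd_same q k r s : upd (upd q k r) k s = upd q k s.
Proof. extensionality i. unfold upd. destruct (Nat.eqb i k); auto. Qed.

Lemma upd_upd_comm q k j r s : k <> j -> upd (upd q k r) j s = upd (upd q j s) k r.
Proof.
  intro H. extensionality i. unfold upd.
  destruct (Nat.eqb_spec i j), (Nat.eqb_spec i k); subst; auto. lia.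
Qed.

Lemma upd_same q k : upd q k (q k) = q.
Proof. extensionality i. unfold upd. destruct (Nat.eqb_spec i k); subst; auto. Qed.

Lemma upd_eq q k s : upd q k s k = s.
Proof. unfold upd. rewrite Nat.eqb_refl. auto. Qed.

Lemma upd_neq q k j s : j <> k -> upd q k s j = q j.
Proof. intro. unfold upd. destruct (Nat.eqb_spec j k); auto; lia. Qed.

Lemma lift5_Dk f k q : (k < 5)%nat -> lift5 (Dk k f) q = PDv (lift5 f) k q.
Proof.
  intros Hk. change (lift5 (Dk k f) q) with (Dk k f (q 0%nat) (q 1%nat) (q 2%nat) (q 3%nat) (q 4%nat)).
  unfold Dk. destruct (Nat.ltb_spec k 5); [|lia].
  apply dep5_PDv; [apply dep5_lift5|auto|]. apply vec5_agree.
Qed.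

Lemma Dk_ge5 f k : (5 <= k)%nat -> Dk k f = c0.
Proof. intro. unfold Dk. replace (Nat.ltb k 5) with false; auto. symmetry; apply Nat.ltb_ge; lia. Qed.

Lemma line_affine f k q c : Smooth5 f -> (k < 5)%nat ->
  (forall r, lift5 (Dk k f) (upd q k r) = c) ->
  forall s, lift5 f (upd q k s) = lift5 f q + c * (s - q k).
Proof.
  intros Hf Hk Hc s.
  set (g := fun r => lift5 f (upd q k r)).
  assert (Hd : forall r, derivable_pt_lim g r c).
  { intro r. pose proof (sm_deriv f k (upd q k r) Hf Hk) as H.
    rewrite upd_eq, Hc in H. unfold g.
    replace (fun r0 => lift5 f (upd q k r0)) with (fun s0 => lift5 f (upd (upd q k r) k s0)); auto.
    extensionality s0. rewrite upd_upd_same; auto. }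
  change (lift5 f (upd q k s)) with (g s).
  replace (lift5 f q) with (g (q k)) by (unfold g; rewrite upd_same; auto).
  destruct (Rtotal_order (q k) s) as [Hlt|[Heq|Hgt]].
  - destruct (MVT_cor2 g (fun _ => c) (q k) s Hlt (fun r _ => Hd r)) as [z [Hz _]]. lra.
  - subst. ring.
  - destruct (MVT_cor2 g (fun _ => c) s (q k) Hgt (fun r _ => Hd r)) as [z [Hz _]]. lra.
Qed.

Lemma D_zero_indep f k : Smooth5 f -> (k < 5)%nat ->
  (forall q, lift5 (Dk k f) q = 0) -> indep k f.
Proof.
  intros Hf Hk H q s. rewrite (line_affine f k q 0 Hf Hk); [ring|]. intro; apply H.
Qed.

Lemma indep_D_self f k q : indep k f -> lift5 (Dk k f) q = 0.
Proof.
  intros Hi. destruct (Nat.ltb_spec k 5) as [Hk|Hk].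
  - rewrite lift5_Dk by auto. unfold PDv. apply dlim_eq.
    apply (dpl_const_fun _ _ (lift5 f q)). intro s. apply Hi.
  - rewrite Dk_ge5 by lia. reflexivity.
Qed.

Lemma indep_D f k j : indep k f -> indep k (Dk j f).
Proof.
  intros Hi q s. destruct (Nat.eq_dec j k) as [->|Hjk].
  - rewrite !indep_D_self; auto.
  - destruct (Nat.ltb_spec j 5) as [Hj|Hj].
    + rewrite !lift5_Dk by auto. unfold PDv. rewrite upd_neq by auto. f_equal.
      extensionality r. rewrite <- upd_upd_comm by auto. apply Hi.
    + rewrite Dk_ge5 by lia. reflexivity.
Qed.

Lemma indep_Dks f k K : indep k f -> indep k (Dks K f).
Proof. intros Hi; induction K; simpl; auto using indep_D. Qed.

Lemma zero_fun_Dk f j : (forall q, lift5 f q = 0) -> forall q, lift5 (Dk j f) q = 0.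
Proof.
  intros H q. destruct (Nat.ltb_spec j 5) as [Hj|Hj].
  - rewrite lift5_Dk by auto. unfold PDv. apply dlim_eq.
    apply (dpl_const_fun _ _ 0). intro; apply H.
  - rewrite Dk_ge5 by lia. reflexivity.
Qed.

Lemma eq_fun_Dks f g K : (forall q, lift5 f q = lift5 g q) -> Dks K f = Dks K g.
Proof.
  intros H. replace g with f; auto.
  extensionality t; extensionality x; extensionality y; extensionality u; extensionality v.
  exact (H (vec5 t x y u v)).
Qed.


Section Extract.
Variable V : VF.
Variables e1 e2 al : R.
Hypothesis HS : SymCond (envV V) e1 e2 al.
Definition dd (c : nat) (K : list nat) (t x y u v : R) := Dks K (envV V c) t x y u v.

Ltac P l H1 H2 := getpt HS l _ _ _ H1 H2.
Lemma F1 t x y u v : dd 0 [1]%nat t x y u v = 0.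
Proof.
  getpt HS [E 0 0 0 0 u; E 1 0 0 0 v] t x y H0a H0b.
  getpt HS [E 0 0 0 0 u; E 1 0 0 0 v; E 0 2 1 0 (1)] t x y H1a H1b.
  unfold dd. lra.
Qed.

Lemma F2 t x y u v : dd 0 [2]%nat t x y u v = 0.
Proof.
  getpt HS [E 0 0 0 0 u; E 1 0 0 0 v] t x y H0a H0b.
  getpt HS [E 0 0 0 0 u; E 1 0 0 0 v; E 0 2 0 1 (1)] t x y H1a H1b.
  unfold dd. lra.
Qed.

Lemma F3 t x y u v : dd 0 [3]%nat t x y u v = 0.
Proof.
  getpt HS [E 0 0 0 0 u; E 1 0 0 0 v] t x y H0a H0b.
  getpt HS [E 0 0 0 0 u; E 1 0 0 0 v; E 0 1 0 1 (1)] t x y H1a H1b.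
  getpt HS [E 0 0 0 0 u; E 1 0 0 0 v; E 0 1 0 1 (-1)] t x y H2a H2b.
  unfold dd. lra.
Qed.

Lemma F4 t x y u v : dd 0 [4]%nat t x y u v = 0.
Proof.
  getpt HS [E 0 0 0 0 u; E 1 0 0 0 v] t x y H0a H0b.
  getpt HS [E 0 0 0 0 u; E 1 0 0 0 v; E 1 1 1 0 (1)] t x y H1a H1b.
  getpt HS [E 0 0 0 0 u; E 1 0 0 0 v; E 1 1 1 0 (-1)] t x y H2a H2b.
  unfold dd. lra.
Qed.

Lemma F5 t x y u v : dd 1 [4]%nat t x y u v = 0.
Proof.
  getpt HS [E 0 0 0 0 u; E 1 0 0 0 v; E 0 0 1 0 (1); E 1 0 0 3 (0)] t x y H0a H0b.
  getpt HS [E 0 0 0 0 u; E 1 0 0 0 v; E 0 0 1 0 (1); E 1 0 0 3 (1)] t x y H1a H1b.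
  getpt HS [E 0 0 0 0 u; E 1 0 0 0 v; E 0 0 1 0 (-1); E 1 0 0 3 (0)] t x y H2a H2b.
  getpt HS [E 0 0 0 0 u; E 1 0 0 0 v; E 0 0 1 0 (-1); E 1 0 0 3 (1)] t x y H3a H3b.
  unfold dd. lra.
Qed.

Lemma F9 t x y u v : dd 3 [4]%nat t x y u v = 0.
Proof.
  getpt HS [E 0 0 0 0 u; E 1 0 0 0 v; E 0 0 1 0 (1); E 1 0 0 3 (0)] t x y H0a H0b.
  getpt HS [E 0 0 0 0 u; E 1 0 0 0 v; E 0 0 1 0 (1); E 1 0 0 3 (1)] t x y H1a H1b.
  getpt HS [E 0 0 0 0 u; E 1 0 0 0 v; E 0 0 1 0 (-1); E 1 0 0 3 (0)] t x y H2a H2b.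
  getpt HS [E 0 0 0 0 u; E 1 0 0 0 v; E 0 0 1 0 (-1); E 1 0 0 3 (1)] t x y H3a H3b.
  unfold dd. lra.
Qed.

Lemma F17 t x y u v : - dd 2 [0]%nat t x y u v - dd 3 [1]%nat t x y u v = 0.
Proof.
  getpt HS [E 0 0 0 0 u; E 1 0 0 0 v; E 0 0 1 0 (0); E 0 0 2 1 (0)] t x y H0a H0b.
  getpt HS [E 0 0 0 0 u; E 1 0 0 0 v; E 0 0 1 0 (0); E 0 0 2 1 (1)] t x y H1a H1b.
  getpt HS [E 0 0 0 0 u; E 1 0 0 0 v; E 0 0 1 0 (1); E 0 0 2 1 (0)] t x y H2a H2b.
  getpt HS [E 0 0 0 0 u; E 1 0 0 0 v; E 0 0 1 0 (1); E 0 0 2 1 (1); E 0 1 2 0 (1)] t x y H3a H3b.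
  getpt HS [E 0 0 0 0 u; E 1 0 0 0 v; E 0 0 1 0 (-1); E 0 0 2 1 (0)] t x y H4a H4b.
  getpt HS [E 0 0 0 0 u; E 1 0 0 0 v; E 0 0 1 0 (-1); E 0 0 2 1 (1); E 0 1 2 0 (-1)] t x y H5a H5b.
  unfold dd. lra.
Qed.

Lemma F13 t x y u v : - dd 3 [3]%nat t x y u v - dd 0 [0]%nat t x y u v + dd 1 [1]%nat t x y u v + dd 2 [2]%nat t x y u v = 0.
Proof.
  getpt HS [E 0 0 0 0 u; E 1 0 0 0 v; E 0 0 1 0 (0); E 0 0 2 1 (0)] t x y H0a H0b.
  getpt HS [E 0 0 0 0 u; E 1 0 0 0 v; E 0 0 1 0 (0); E 0 0 2 1 (1)] t x y H1a H1b.
  getpt HS [E 0 0 0 0 u; E 1 0 0 0 v; E 0 0 1 0 (1); E 0 0 2 1 (0)] t x y H2a H2b.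
  getpt HS [E 0 0 0 0 u; E 1 0 0 0 v; E 0 0 1 0 (1); E 0 0 2 1 (1); E 0 1 2 0 (1)] t x y H3a H3b.
  getpt HS [E 0 0 0 0 u; E 1 0 0 0 v; E 0 0 1 0 (-1); E 0 0 2 1 (0)] t x y H4a H4b.
  getpt HS [E 0 0 0 0 u; E 1 0 0 0 v; E 0 0 1 0 (-1); E 0 0 2 1 (1); E 0 1 2 0 (-1)] t x y H5a H5b.
  unfold dd. lra.
Qed.

Lemma F6 t x y u v : dd 1 [3]%nat t x y u v + dd 0 [2]%nat t x y u v = 0.
Proof.
  getpt HS [E 0 0 0 0 u; E 1 0 0 0 v; E 0 0 1 0 (0); E 0 0 2 1 (0)] t x y H0a H0b.
  getpt HS [E 0 0 0 0 u; E 1 0 0 0 v; E 0 0 1 0 (0); E 0 0 2 1 (1)] t x y H1a H1b.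
  getpt HS [E 0 0 0 0 u; E 1 0 0 0 v; E 0 0 1 0 (1); E 0 0 2 1 (0)] t x y H2a H2b.
  getpt HS [E 0 0 0 0 u; E 1 0 0 0 v; E 0 0 1 0 (1); E 0 0 2 1 (1); E 0 1 2 0 (1)] t x y H3a H3b.
  getpt HS [E 0 0 0 0 u; E 1 0 0 0 v; E 0 0 1 0 (-1); E 0 0 2 1 (0)] t x y H4a H4b.
  getpt HS [E 0 0 0 0 u; E 1 0 0 0 v; E 0 0 1 0 (-1); E 0 0 2 1 (1); E 0 1 2 0 (-1)] t x y H5a H5b.
  unfold dd. lra.
Qed.

Lemma F20 t x y u v : dd 3 [0;3;1]%nat t x y u v + dd 3 [0;1;3]%nat t x y u v - dd 1 [0;1;1]%nat t x y u v - dd 3 [1;1;2]%nat t x y u v - dd 4 [2]%nat t x y u v * e1 - dd 1 [0;2;2]%nat t x y u v - dd 3 [2;2;2]%nat t x y u v + dd 1 [0]%nat t x y u v * e1 = 0.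
Proof.
  getpt HS [E 0 0 0 0 u; E 1 0 0 0 v; E 0 0 1 0 (0); E 0 0 2 1 (0)] t x y H0a H0b.
  getpt HS [E 0 0 0 0 u; E 1 0 0 0 v; E 0 0 1 0 (1); E 0 0 2 1 (0)] t x y H1a H1b.
  getpt HS [E 0 0 0 0 u; E 1 0 0 0 v; E 0 0 1 0 (-1); E 0 0 2 1 (0)] t x y H2a H2b.
  getpt HS [E 0 0 0 0 u; E 1 0 0 0 v; E 0 0 1 0 (2); E 0 0 2 1 (0)] t x y H3a H3b.
  getpt HS [E 0 0 0 0 u; E 1 0 0 0 v; E 0 0 1 0 (-2); E 0 0 2 1 (0)] t x y H4a H4b.
  unfold dd. lra.
Qed.

Lemma F16 t x y u v : - dd 1 [0]%nat t x y u v + dd 3 [2]%nat t x y u v = 0.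
Proof.
  getpt HS [E 0 0 0 0 u; E 1 0 0 0 v; E 0 0 0 1 (0); E 0 0 3 0 (0)] t x y H0a H0b.
  getpt HS [E 0 0 0 0 u; E 1 0 0 0 v; E 0 0 0 1 (0); E 0 0 3 0 (1)] t x y H1a H1b.
  getpt HS [E 0 0 0 0 u; E 1 0 0 0 v; E 0 0 0 1 (1); E 0 0 3 0 (0)] t x y H2a H2b.
  getpt HS [E 0 0 0 0 u; E 1 0 0 0 v; E 0 0 0 1 (1); E 0 0 3 0 (1); E 0 1 2 0 (-1)] t x y H3a H3b.
  getpt HS [E 0 0 0 0 u; E 1 0 0 0 v; E 0 0 0 1 (-1); E 0 0 3 0 (0)] t x y H4a H4b.
  getpt HS [E 0 0 0 0 u; E 1 0 0 0 v; E 0 0 0 1 (-1); E 0 0 3 0 (1); E 0 1 2 0 (1)] t x y H5a H5b.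
  unfold dd. lra.
Qed.

Lemma F7 t x y u v : - dd 2 [3]%nat t x y u v + 3 * dd 0 [1]%nat t x y u v = 0.
Proof.
  getpt HS [E 0 0 0 0 u; E 1 0 0 0 v; E 0 0 0 1 (0); E 0 0 3 0 (0)] t x y H0a H0b.
  getpt HS [E 0 0 0 0 u; E 1 0 0 0 v; E 0 0 0 1 (0); E 0 0 3 0 (1)] t x y H1a H1b.
  getpt HS [E 0 0 0 0 u; E 1 0 0 0 v; E 0 0 0 1 (1); E 0 0 3 0 (0)] t x y H2a H2b.
  getpt HS [E 0 0 0 0 u; E 1 0 0 0 v; E 0 0 0 1 (1); E 0 0 3 0 (1); E 0 1 2 0 (-1)] t x y H3a H3b.
  getpt HS [E 0 0 0 0 u; E 1 0 0 0 v; E 0 0 0 1 (-1); E 0 0 3 0 (0)] t x y H4a H4b.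
  getpt HS [E 0 0 0 0 u; E 1 0 0 0 v; E 0 0 0 1 (-1); E 0 0 3 0 (1); E 0 1 2 0 (1)] t x y H5a H5b.
  unfold dd. lra.
Qed.

Lemma F10 t x y u v : dd 4 [3]%nat t x y u v = 0.
Proof.
  getpt HS [E 0 0 0 0 u; E 1 0 0 0 v; E 0 0 0 1 (0); E 0 0 3 0 (0)] t x y H0a H0b.
  getpt HS [E 0 0 0 0 u; E 1 0 0 0 v; E 0 0 0 1 (0); E 0 0 3 0 (1)] t x y H1a H1b.
  getpt HS [E 0 0 0 0 u; E 1 0 0 0 v; E 0 0 0 1 (1); E 0 0 3 0 (0)] t x y H2a H2b.
  getpt HS [E 0 0 0 0 u; E 1 0 0 0 v; E 0 0 0 1 (1); E 0 0 3 0 (1); E 0 1 2 0 (-1)] t x y H3a H3b.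
  getpt HS [E 0 0 0 0 u; E 1 0 0 0 v; E 0 0 0 1 (-1); E 0 0 3 0 (0)] t x y H4a H4b.
  getpt HS [E 0 0 0 0 u; E 1 0 0 0 v; E 0 0 0 1 (-1); E 0 0 3 0 (1); E 0 1 2 0 (1)] t x y H5a H5b.
  unfold dd. lra.
Qed.

Lemma F22 t x y u v : - dd 2 [0;1;1]%nat t x y u v + dd 3 [1;1;1]%nat t x y u v + dd 4 [1]%nat t x y u v * e1 + dd 3 [0;3;2]%nat t x y u v + dd 3 [0;2;3]%nat t x y u v - dd 2 [0;2;2]%nat t x y u v + dd 2 [0]%nat t x y u v * e1 + dd 3 [1;2;2]%nat t x y u v = 0.
Proof.
  getpt HS [E 0 0 0 0 u; E 1 0 0 0 v; E 0 0 0 1 (0); E 0 0 3 0 (0)] t x y H0a H0b.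
  getpt HS [E 0 0 0 0 u; E 1 0 0 0 v; E 0 0 0 1 (1); E 0 0 3 0 (0)] t x y H1a H1b.
  getpt HS [E 0 0 0 0 u; E 1 0 0 0 v; E 0 0 0 1 (-1); E 0 0 3 0 (0)] t x y H2a H2b.
  getpt HS [E 0 0 0 0 u; E 1 0 0 0 v; E 0 0 0 1 (2); E 0 0 3 0 (0)] t x y H3a H3b.
  getpt HS [E 0 0 0 0 u; E 1 0 0 0 v; E 0 0 0 1 (-2); E 0 0 3 0 (0)] t x y H4a H4b.
  unfold dd. lra.
Qed.

Lemma F8 t x y u v : dd 2 [4]%nat t x y u v = 0.
Proof.
  getpt HS [E 0 0 0 0 u; E 1 0 0 0 v; E 1 0 2 0 (0); E 1 1 0 1 (0)] t x y H0a H0b.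
  getpt HS [E 0 0 0 0 u; E 1 0 0 0 v; E 1 0 2 0 (1); E 1 1 0 1 (0)] t x y H1a H1b.
  getpt HS [E 0 0 0 0 u; E 1 0 0 0 v; E 1 0 2 0 (0); E 1 1 0 1 (1)] t x y H2a H2b.
  getpt HS [E 0 0 0 0 u; E 1 0 0 0 v; E 1 0 2 0 (1); E 1 1 0 1 (1)] t x y H3a H3b.
  unfold dd. lra.
Qed.

Lemma F11 t x y u v : dd 2 [1]%nat t x y u v + dd 1 [2]%nat t x y u v = 0.
Proof.
  getpt HS [E 0 0 0 0 u; E 1 0 0 0 v] t x y H0a H0b.
  getpt HS [E 0 0 0 0 u; E 1 0 0 0 v; E 0 1 1 1 (1)] t x y H1a H1b.
  unfold dd. lra.
Qed.

Lemma F12 t x y u v : dd 1 [1]%nat t x y u v - dd 2 [2]%nat t x y u v = 0.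
Proof.
  getpt HS [E 0 0 0 0 u; E 1 0 0 0 v] t x y H0a H0b.
  getpt HS [E 0 0 0 0 u; E 1 0 0 0 v; E 0 1 0 2 (1); E 0 1 2 0 (-1)] t x y H1a H1b.
  unfold dd. lra.
Qed.

Lemma F19 t x y u v : - dd 2 [0]%nat t x y u v - dd 4 [1]%nat t x y u v = 0.
Proof.
  getpt HS [E 0 0 0 0 u; E 1 0 0 0 v; E 1 0 1 0 (0); E 1 0 2 1 (0)] t x y H0a H0b.
  getpt HS [E 0 0 0 0 u; E 1 0 0 0 v; E 1 0 1 0 (0); E 1 0 2 1 (1)] t x y H1a H1b.
  getpt HS [E 0 0 0 0 u; E 1 0 0 0 v; E 1 0 1 0 (1); E 1 0 2 1 (0)] t x y H2a H2b.
  getpt HS [E 0 0 0 0 u; E 1 0 0 0 v; E 1 0 1 0 (1); E 1 0 2 1 (1); E 1 1 2 0 (1)] t x y H3a H3b.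
  getpt HS [E 0 0 0 0 u; E 1 0 0 0 v; E 1 0 1 0 (-1); E 1 0 2 1 (0)] t x y H4a H4b.
  getpt HS [E 0 0 0 0 u; E 1 0 0 0 v; E 1 0 1 0 (-1); E 1 0 2 1 (1); E 1 1 2 0 (-1)] t x y H5a H5b.
  unfold dd. lra.
Qed.

Lemma F14 t x y u v : - dd 4 [4]%nat t x y u v - dd 0 [0]%nat t x y u v + dd 1 [1]%nat t x y u v + dd 2 [2]%nat t x y u v = 0.
Proof.
  getpt HS [E 0 0 0 0 u; E 1 0 0 0 v; E 1 0 1 0 (0); E 1 0 2 1 (0)] t x y H0a H0b.
  getpt HS [E 0 0 0 0 u; E 1 0 0 0 v; E 1 0 1 0 (0); E 1 0 2 1 (1)] t x y H1a H1b.
  getpt HS [E 0 0 0 0 u; E 1 0 0 0 v; E 1 0 1 0 (1); E 1 0 2 1 (0)] t x y H2a H2b.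
  getpt HS [E 0 0 0 0 u; E 1 0 0 0 v; E 1 0 1 0 (1); E 1 0 2 1 (1); E 1 1 2 0 (1)] t x y H3a H3b.
  getpt HS [E 0 0 0 0 u; E 1 0 0 0 v; E 1 0 1 0 (-1); E 1 0 2 1 (0)] t x y H4a H4b.
  getpt HS [E 0 0 0 0 u; E 1 0 0 0 v; E 1 0 1 0 (-1); E 1 0 2 1 (1); E 1 1 2 0 (-1)] t x y H5a H5b.
  unfold dd. lra.
Qed.

Lemma F21 t x y u v : dd 4 [0;4;1]%nat t x y u v + dd 4 [0;1;4]%nat t x y u v - dd 1 [0;1;1]%nat t x y u v - dd 4 [1;1;2]%nat t x y u v + dd 3 [2]%nat t x y u v * al * e2 - dd 4 [2;2;2]%nat t x y u v - dd 1 [0;2;2]%nat t x y u v - dd 1 [0]%nat t x y u v * e2 = 0.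
Proof.
  getpt HS [E 0 0 0 0 u; E 1 0 0 0 v; E 1 0 1 0 (0); E 1 0 2 1 (0)] t x y H0a H0b.
  getpt HS [E 0 0 0 0 u; E 1 0 0 0 v; E 1 0 1 0 (1); E 1 0 2 1 (0)] t x y H1a H1b.
  getpt HS [E 0 0 0 0 u; E 1 0 0 0 v; E 1 0 1 0 (-1); E 1 0 2 1 (0)] t x y H2a H2b.
  getpt HS [E 0 0 0 0 u; E 1 0 0 0 v; E 1 0 1 0 (2); E 1 0 2 1 (0)] t x y H3a H3b.
  getpt HS [E 0 0 0 0 u; E 1 0 0 0 v; E 1 0 1 0 (-2); E 1 0 2 1 (0)] t x y H4a H4b.
  unfold dd. lra.
Qed.

Lemma F15 t x y u v : dd 3 [4;1;1]%nat t x y u v - dd 3 [3]%nat t x y u v * e1 - dd 3 [4]%nat t x y u v * e2 + 2 * dd 1 [1]%nat t x y u v * e1 + dd 3 [4;2;2]%nat t x y u v - dd 3 [4]%nat t x y u v * e1 + dd 4 [4]%nat t x y u v * e1 = 0.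
Proof.
  getpt HS [E 0 0 0 0 u; E 1 0 0 0 v] t x y H0a H0b.
  getpt HS [E 0 0 0 0 u; E 1 0 0 0 v; E 1 1 0 0 (1); E 0 1 2 0 (-e1); E 1 1 2 0 (-e2)] t x y H1a H1b.
  unfold dd. lra.
Qed.

Lemma F18 t x y u v : - dd 1 [0]%nat t x y u v + dd 4 [2]%nat t x y u v = 0.
Proof.
  getpt HS [E 0 0 0 0 u; E 1 0 0 0 v] t x y H0a H0b.
  getpt HS [E 0 0 0 0 u; E 1 0 0 0 v; E 1 0 3 0 (1)] t x y H1a H1b.
  unfold dd. lra.
Qed.

Lemma F23 t x y u v : - dd 2 [0;1;1]%nat t x y u v - dd 3 [1]%nat t x y u v * al * e2 + dd 4 [1;1;1]%nat t x y u v + dd 4 [0;4;2]%nat t x y u v + dd 4 [0;2;4]%nat t x y u v - dd 2 [0;2;2]%nat t x y u v - dd 2 [0]%nat t x y u v * e2 + dd 4 [1;2;2]%nat t x y u v = 0.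
Proof.
  getpt HS [E 0 0 0 0 u; E 1 0 0 0 v; E 1 0 0 1 (0)] t x y H0a H0b.
  getpt HS [E 0 0 0 0 u; E 1 0 0 0 v; E 1 0 0 1 (1)] t x y H1a H1b.
  getpt HS [E 0 0 0 0 u; E 1 0 0 0 v; E 1 0 0 1 (-1)] t x y H2a H2b.
  getpt HS [E 0 0 0 0 u; E 1 0 0 0 v; E 1 0 0 1 (2)] t x y H3a H3b.
  getpt HS [E 0 0 0 0 u; E 1 0 0 0 v; E 1 0 0 1 (-2)] t x y H4a H4b.
  unfold dd. lra.
Qed.

Lemma F24 t x y u v : dd 3 [0;1;1]%nat t x y u v + dd 3 [0;2;2]%nat t x y u v - dd 3 [0]%nat t x y u v * e1 + dd 4 [0]%nat t x y u v * e1 = 0.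
Proof.
  getpt HS [E 0 0 0 0 u; E 1 0 0 0 v] t x y H0a H0b.
  unfold dd. lra.
Qed.

Lemma F25 t x y u v : dd 4 [0;1;1]%nat t x y u v + dd 4 [0;2;2]%nat t x y u v - dd 3 [0]%nat t x y u v * al * e2 + dd 4 [0]%nat t x y u v * e2 = 0.
Proof.
  getpt HS [E 0 0 0 0 u; E 1 0 0 0 v] t x y H0a H0b.
  unfold dd. lra.
Qed.

End Extract.


Lemma Dks_app K1 K2 f : Dks (K1 ++ K2) f = Dks K1 (Dks K2 f).
Proof. induction K1; simpl; auto. rewrite IHK1; auto. Qed.

Lemma Dks_zero f K : (forall q, lift5 f q = 0) -> forall q, lift5 (Dks K f) q = 0.
Proof. intros H; induction K; simpl; auto. apply zero_fun_Dk; auto. Qed.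

Lemma indep_eq g h k a : (forall q, lift5 g q = a * lift5 h q) -> indep k h -> indep k g.
Proof. intros H Hi q s. rewrite !H, Hi. auto. Qed.

Lemma all_indep_const g : (forall k, (k < 5)%nat -> indep k g) ->
  forall t x y u v, g t x y u v = g 0 0 0 0 0.
Proof.
  intros H t x y u v.
  transitivity (g 0 x y u v). { symmetry. exact (H 0%nat ltac:(lia) (vec5 t x y u v) 0). }
  transitivity (g 0 0 y u v). { symmetry. exact (H 1%nat ltac:(lia) (vec5 0 x y u v) 0). }
  transitivity (g 0 0 0 u v). { symmetry. exact (H 2%nat ltac:(lia) (vec5 0 0 y u v) 0). }
  transitivity (g 0 0 0 0 v). { symmetry. exact (H 3%nat ltac:(lia) (vec5 0 0 0 u v) 0). }
  symmetry. exact (H 4%nat ltac:(lia) (vec5 0 0 0 0 v) 0).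
Qed.

Lemma affine5 g a0 a1 a2 a3 a4 : Smooth5 g ->
  (forall t x y u v, Dk 0 g t x y u v = a0) -> (forall t x y u v, Dk 1 g t x y u v = a1) ->
  (forall t x y u v, Dk 2 g t x y u v = a2) -> (forall t x y u v, Dk 3 g t x y u v = a3) ->
  (forall t x y u v, Dk 4 g t x y u v = a4) ->
  forall t x y u v, g t x y u v = g 0 0 0 0 0 + a0 * t + a1 * x + a2 * y + a3 * u + a4 * v.
Proof.
  intros Hg H0 H1 H2 H3 H4 t x y u v.
  pose proof (line_affine g 0 (vec5 0 x y u v) a0 Hg ltac:(lia) (fun r => H0 r x y u v) t) as S0.
  pose proof (line_affine g 1 (vec5 0 0 y u v) a1 Hg ltac:(lia) (fun r => H1 0 r y u v) x) as S1.
  pose proof (line_affine g 2 (vec5 0 0 0 u v) a2 Hg ltac:(lia) (fun r => H2 0 0 r u v) y) as S2.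
  pose proof (line_affine g 3 (vec5 0 0 0 0 v) a3 Hg ltac:(lia) (fun r => H3 0 0 0 r v) u) as S3.
  pose proof (line_affine g 4 (vec5 0 0 0 0 0) a4 Hg ltac:(lia) (fun r => H4 0 0 0 0 r) v) as S4.
  change (g t x y u v = g 0 x y u v + a0 * (t - 0)) in S0.
  change (g 0 x y u v = g 0 0 y u v + a1 * (x - 0)) in S1.
  change (g 0 0 y u v = g 0 0 0 u v + a2 * (y - 0)) in S2.
  change (g 0 0 0 u v = g 0 0 0 0 v + a3 * (u - 0)) in S3.
  change (g 0 0 0 0 v = g 0 0 0 0 0 + a4 * (v - 0)) in S4.
  lra.
Qed.

Section Solve.
Variable V : VF.
Variables e1 e2 al : R.
Hypothesis HV : SmoothVF V.
Hypothesis HS : SymCond (envV V) e1 e2 al.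
Hypothesis He1 : e1 <> 0.
Hypothesis He2 : e2 <> 0.
Hypothesis Hal : al <> 1.

Arguments dd V c%_nat_scope K%_nat_scope t x y u v.
Notation f c := (envV V c).
Notation ddv c K := (dd V c K).

Lemma envsm c : Smooth5 (f c).
Proof. apply envV_OK; auto. Qed.

Lemma zi c k : (k < 5)%nat -> (forall t x y u v, ddv c [k] t x y u v = 0) -> indep k (f c).
Proof.
  intros Hk H. apply D_zero_indep; auto using envsm.
  intro q. exact (H (q 0%nat) (q 1%nat) (q 2%nat) (q 3%nat) (q 4%nat)).
Qed.

Lemma feq c1 K1 c2 K2 : (forall t x y u v, ddv c1 K1 t x y u v = ddv c2 K2 t x y u v) ->
  forall K t x y u v, ddv c1 (K ++ K1) t x y u v = ddv c2 (K ++ K2) t x y u v.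
Proof.
  intros H K t x y u v. unfold dd. rewrite !Dks_app.
  rewrite (eq_fun_Dks (Dks K1 (f c1)) (Dks K2 (f c2))); auto.
  intro q. exact (H (q 0%nat) (q 1%nat) (q 2%nat) (q 3%nat) (q 4%nat)).
Qed.

Lemma fzero c K1 : (forall t x y u v, ddv c K1 t x y u v = 0) ->
  forall K t x y u v, ddv c (K ++ K1) t x y u v = 0.
Proof.
  intros H K t x y u v. unfold dd. rewrite Dks_app.
  exact (Dks_zero (Dks K1 (f c)) K (fun q => H (q 0%nat) (q 1%nat) (q 2%nat) (q 3%nat) (q 4%nat)) (vec5 t x y u v)).
Qed.

Lemma iz c K1 k : indep k (Dks K1 (f c)) ->
  forall K t x y u v, ddv c (K ++ k :: K1) t x y u v = 0.
Proof.
  intros Hi K t x y u v. unfold dd. change (K ++ k :: K1) with (K ++ [k] ++ K1). rewrite !Dks_app.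
  exact (Dks_zero (Dks [k] (Dks K1 (f c))) K (fun q => indep_D_self _ _ q Hi) (vec5 t x y u v)).
Qed.


Ltac fx L := let H := fresh "HF" in pose proof (L V e1 e2 al HS) as H.

Lemma iT k : (1 <= k < 5)%nat -> indep k (f 0).
Proof.
  intros Hk. destruct k as [|[|[|[|[|k]]]]]; try lia; apply zi; try lia.
  - exact (F1 V e1 e2 al HS).
  - exact (F2 V e1 e2 al HS).
  - exact (F3 V e1 e2 al HS).
  - exact (F4 V e1 e2 al HS).
Qed.

Lemma iX3 : indep 3 (f 1).
Proof. apply zi; [lia|]. intros. fx F6. fx F2. specialize (HF t x y u v). specialize (HF0 t x y u v). lra. Qed.
Lemma iX4 : indep 4 (f 1).
Proof. apply zi; [lia|]. exact (F5 V e1 e2 al HS). Qed.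
Lemma iY3 : indep 3 (f 2).
Proof. apply zi; [lia|]. intros. fx F7. fx F1. specialize (HF t x y u v). specialize (HF0 t x y u v). lra. Qed.
Lemma iY4 : indep 4 (f 2).
Proof. apply zi; [lia|]. exact (F8 V e1 e2 al HS). Qed.
Lemma iP14 : indep 4 (f 3).
Proof. apply zi; [lia|]. exact (F9 V e1 e2 al HS). Qed.
Lemma iP23 : indep 3 (f 4).
Proof. apply zi; [lia|]. exact (F10 V e1 e2 al HS). Qed.

Lemma EQy t x y u v : ddv 4 [2]%nat t x y u v = ddv 3 [2]%nat t x y u v.
Proof. fx F16. fx F18. specialize (HF t x y u v). specialize (HF0 t x y u v). lra. Qed.
Lemma EQx t x y u v : ddv 4 [1]%nat t x y u v = ddv 3 [1]%nat t x y u v.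
Proof. fx F17. fx F19. specialize (HF t x y u v). specialize (HF0 t x y u v). lra. Qed.
Lemma EQuv t x y u v : ddv 4 [4]%nat t x y u v = ddv 3 [3]%nat t x y u v.
Proof. fx F13. fx F14. specialize (HF t x y u v). specialize (HF0 t x y u v). lra. Qed.

Lemma i_D1P2 : indep 4 (Dks [1]%nat (f 4)).
Proof.
  apply (indep_eq _ (Dk 0 (f 2)) 4 (-1)).
  - intro q. fx F19. specialize (HF (q 0%nat) (q 1%nat) (q 2%nat) (q 3%nat) (q 4%nat)). unfold dd in HF.
    change (lift5 (Dks [1]%nat (f 4)) q) with (Dks [1]%nat (f 4) (q 0%nat) (q 1%nat) (q 2%nat) (q 3%nat) (q 4%nat)).
    change (lift5 (Dk 0 (f 2)) q) with (Dks [0]%nat (f 2) (q 0%nat) (q 1%nat) (q 2%nat) (q 3%nat) (q 4%nat)). lra.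
  - apply indep_D, iY4.
Qed.
Lemma i_D1P1 : indep 3 (Dks [1]%nat (f 3)).
Proof.
  apply (indep_eq _ (Dk 0 (f 2)) 3 (-1)).
  - intro q. fx F17. specialize (HF (q 0%nat) (q 1%nat) (q 2%nat) (q 3%nat) (q 4%nat)). unfold dd in HF.
    change (lift5 (Dks [1]%nat (f 3)) q) with (Dks [1]%nat (f 3) (q 0%nat) (q 1%nat) (q 2%nat) (q 3%nat) (q 4%nat)).
    change (lift5 (Dk 0 (f 2)) q) with (Dks [0]%nat (f 2) (q 0%nat) (q 1%nat) (q 2%nat) (q 3%nat) (q 4%nat)). lra.
  - apply indep_D, iY3.
Qed.
Lemma i_D2P2 : indep 4 (Dks [2]%nat (f 4)).
Proof.
  apply (indep_eq _ (Dk 0 (f 1)) 4 1).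
  - intro q. fx F18. specialize (HF (q 0%nat) (q 1%nat) (q 2%nat) (q 3%nat) (q 4%nat)). unfold dd in HF.
    change (lift5 (Dks [2]%nat (f 4)) q) with (Dks [2]%nat (f 4) (q 0%nat) (q 1%nat) (q 2%nat) (q 3%nat) (q 4%nat)).
    change (lift5 (Dk 0 (f 1)) q) with (Dks [0]%nat (f 1) (q 0%nat) (q 1%nat) (q 2%nat) (q 3%nat) (q 4%nat)). lra.
  - apply indep_D, iX4.
Qed.
Lemma i_D2P1 : indep 3 (Dks [2]%nat (f 3)).
Proof.
  apply (indep_eq _ (Dk 0 (f 1)) 3 1).
  - intro q. fx F16. specialize (HF (q 0%nat) (q 1%nat) (q 2%nat) (q 3%nat) (q 4%nat)). unfold dd in HF.
    change (lift5 (Dks [2]%nat (f 3)) q) with (Dks [2]%nat (f 3) (q 0%nat) (q 1%nat) (q 2%nat) (q 3%nat) (q 4%nat)).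
    change (lift5 (Dk 0 (f 1)) q) with (Dks [0]%nat (f 1) (q 0%nat) (q 1%nat) (q 2%nat) (q 3%nat) (q 4%nat)). lra.
  - apply indep_D, iX3.
Qed.

Lemma Xt0 t x y u v : ddv 1 [0]%nat t x y u v = 0.
Proof.
  fx F20. fx F21. specialize (HF t x y u v). specialize (HF0 t x y u v).
  pose proof (feq 4 [2]%nat 3 [2]%nat EQy [1;1]%nat t x y u v) as A1.
  pose proof (feq 4 [2]%nat 3 [2]%nat EQy [2;2]%nat t x y u v) as A2.
  pose proof (feq 4 [4]%nat 3 [3]%nat EQuv [0;1]%nat t x y u v) as A3.
  pose proof (iz 4 [1]%nat 4 i_D1P2 [0]%nat t x y u v) as A4.
  pose proof (iz 3 [1]%nat 3 i_D1P1 [0]%nat t x y u v) as A5.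
  cbn [app] in *.
  fx F16. fx F18. specialize (HF1 t x y u v). specialize (HF2 t x y u v).
  replace (ddv 3 [2]%nat t x y u v) with (ddv 1 [0]%nat t x y u v) in HF0 by lra.
  replace (ddv 4 [2]%nat t x y u v) with (ddv 1 [0]%nat t x y u v) in HF by lra.
  assert (H : ddv 1 [0]%nat t x y u v * (e2 * (al - 1)) = 0) by lra.
  apply Rmult_integral in H. destruct H as [H|H]; auto.
  apply Rmult_integral in H. destruct H; [contradiction|]. exfalso; apply Hal; lra.
Qed.

Lemma Yt0 t x y u v : ddv 2 [0]%nat t x y u v = 0.
Proof.
  fx F22. fx F23. specialize (HF t x y u v). specialize (HF0 t x y u v).
  pose proof (feq 4 [1]%nat 3 [1]%nat EQx [1;1]%nat t x y u v) as A1.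
  pose proof (feq 4 [2]%nat 3 [2]%nat EQy [1;2]%nat t x y u v) as A2.
  pose proof (feq 4 [4]%nat 3 [3]%nat EQuv [0;2]%nat t x y u v) as A3.
  pose proof (iz 4 [2]%nat 4 i_D2P2 [0]%nat t x y u v) as A4.
  pose proof (iz 3 [2]%nat 3 i_D2P1 [0]%nat t x y u v) as A5.
  cbn [app] in *.
  fx F17. fx F19. specialize (HF1 t x y u v). specialize (HF2 t x y u v).
  replace (ddv 3 [1]%nat t x y u v) with (- ddv 2 [0]%nat t x y u v) in HF0 by lra.
  replace (ddv 4 [1]%nat t x y u v) with (- ddv 2 [0]%nat t x y u v) in HF by lra.
  assert (H : ddv 2 [0]%nat t x y u v * (e2 * (al - 1)) = 0) by lra.
  apply Rmult_integral in H. destruct H as [H|H]; auto.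
  apply Rmult_integral in H. destruct H; [contradiction|]. exfalso; apply Hal; lra.
Qed.

Lemma Xx0 t x y u v : ddv 1 [1]%nat t x y u v = 0.
Proof.
  fx F15. specialize (HF t x y u v).
  pose proof (iz 3 [1;1]%nat 4 (indep_Dks _ _ [1;1]%nat iP14) [] t x y u v) as A1.
  pose proof (iz 3 [2;2]%nat 4 (indep_Dks _ _ [2;2]%nat iP14) [] t x y u v) as A2.
  cbn [app] in *. pose proof (EQuv t x y u v) as Eq. fx F9. specialize (HF0 t x y u v).
  rewrite Eq, HF0 in HF.
  assert (H : ddv 1 [1]%nat t x y u v * (2 * e1) = 0) by lra.
  apply Rmult_integral in H. destruct H as [H|H]; auto. exfalso; apply He1; lra.
Qed.

Lemma Yy0 t x y u v : ddv 2 [2]%nat t x y u v = 0.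
Proof. fx F12. specialize (HF t x y u v). pose proof (Xx0 t x y u v). lra. Qed.

Lemma P1x0 t x y u v : ddv 3 [1]%nat t x y u v = 0.
Proof. fx F17. specialize (HF t x y u v). pose proof (Yt0 t x y u v). lra. Qed.
Lemma P1y0 t x y u v : ddv 3 [2]%nat t x y u v = 0.
Proof. fx F16. specialize (HF t x y u v). pose proof (Xt0 t x y u v). lra. Qed.
Lemma P2x0 t x y u v : ddv 4 [1]%nat t x y u v = 0.
Proof. fx F19. specialize (HF t x y u v). pose proof (Yt0 t x y u v). lra. Qed.
Lemma P2y0 t x y u v : ddv 4 [2]%nat t x y u v = 0.
Proof. fx F18. specialize (HF t x y u v). pose proof (Xt0 t x y u v). lra. Qed.

Lemma Pt0 t x y u v : ddv 3 [0]%nat t x y u v = 0 /\ ddv 4 [0]%nat t x y u v = 0.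
Proof.
  fx F24. fx F25. specialize (HF t x y u v). specialize (HF0 t x y u v).
  pose proof (fzero 3 [1]%nat P1x0 [0;1]%nat t x y u v) as A1.
  pose proof (fzero 3 [2]%nat P1y0 [0;2]%nat t x y u v) as A2.
  pose proof (fzero 4 [1]%nat P2x0 [0;1]%nat t x y u v) as A3.
  pose proof (fzero 4 [2]%nat P2y0 [0;2]%nat t x y u v) as A4.
  cbn [app] in *.
  assert (H1 : (ddv 4 [0]%nat t x y u v - ddv 3 [0]%nat t x y u v) * e1 = 0) by lra.
  apply Rmult_integral in H1. destruct H1 as [H1|H1]; [|contradiction].
  replace (ddv 4 [0]%nat t x y u v) with (ddv 3 [0]%nat t x y u v) in HF0 by lra.
  assert (H2 : ddv 3 [0]%nat t x y u v * (e2 * (1 - al)) = 0) by lra.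
  apply Rmult_integral in H2. destruct H2 as [H2|H2].
  - split; lra.
  - apply Rmult_integral in H2. destruct H2; [contradiction|]. exfalso; apply Hal; lra.
Qed.


Lemma Yu0 t x y u v : ddv 2 [3]%nat t x y u v = 0.
Proof. fx F7. fx F1. specialize (HF t x y u v). specialize (HF0 t x y u v). lra. Qed.
Lemma Xu0 t x y u v : ddv 1 [3]%nat t x y u v = 0.
Proof. fx F6. fx F2. specialize (HF t x y u v). specialize (HF0 t x y u v). lra. Qed.

Definition Bc := Dk 0 (f 0) 0 0 0 0 0.
Definition Fc := Dk 2 (f 1) 0 0 0 0 0.

Lemma DT0 t x y u v : Dk 0 (f 0) t x y u v = Bc.
Proof.
  apply all_indep_const. intros k Hk.
  destruct (Nat.eq_dec k 0) as [->|Hk0].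
  - apply (indep_eq _ (Dk 3 (f 3)) 0 (-1)).
    + intro q. fx F13. specialize (HF (q 0%nat) (q 1%nat) (q 2%nat) (q 3%nat) (q 4%nat)).
      pose proof (Xx0 (q 0%nat) (q 1%nat) (q 2%nat) (q 3%nat) (q 4%nat)).
      pose proof (Yy0 (q 0%nat) (q 1%nat) (q 2%nat) (q 3%nat) (q 4%nat)).
      unfold dd in *. change (Dk 0 (f 0) (q 0%nat) (q 1%nat) (q 2%nat) (q 3%nat) (q 4%nat) =
        -1 * Dk 3 (f 3) (q 0%nat) (q 1%nat) (q 2%nat) (q 3%nat) (q 4%nat)).
      cbn [Dks] in *. lra.
    + apply indep_D. apply zi; [lia|]. intros. apply (proj1 (Pt0 t0 x0 y0 u0 v0)).
  - apply indep_D. apply iT. lia.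
Qed.

Lemma DX2 t x y u v : Dk 2 (f 1) t x y u v = Fc.
Proof.
  apply all_indep_const. intros k Hk.
  destruct (Nat.eq_dec k 2) as [->|Hk2].
  - apply (indep_eq _ (Dk 1 (f 2)) 2 (-1)).
    + intro q. fx F11. specialize (HF (q 0%nat) (q 1%nat) (q 2%nat) (q 3%nat) (q 4%nat)).
      unfold dd in *. change (Dk 2 (f 1) (q 0%nat) (q 1%nat) (q 2%nat) (q 3%nat) (q 4%nat) =
        -1 * Dk 1 (f 2) (q 0%nat) (q 1%nat) (q 2%nat) (q 3%nat) (q 4%nat)).
      cbn [Dks] in *. lra.
    + apply indep_D. apply zi; [lia|]. exact Yy0.
  - apply indep_D.
    destruct k as [|[|[|[|[|k]]]]]; try lia.
    + apply zi; [lia|]. exact Xt0.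
    + apply zi; [lia|]. exact Xx0.
    + exact iX3.
    + exact iX4.
Qed.

Lemma InSpan_final : InSpanX V.
Proof.
  pose proof (envsm 0) as S0. pose proof (envsm 1) as S1. pose proof (envsm 2) as S2.
  pose proof (envsm 3) as S3. pose proof (envsm 4) as S4.
  assert (AT := affine5 (f 0) Bc 0 0 0 0 S0 DT0 (F1 V e1 e2 al HS) (F2 V e1 e2 al HS)
                  (F3 V e1 e2 al HS) (F4 V e1 e2 al HS)).
  assert (AX := affine5 (f 1) 0 0 Fc 0 0 S1 Xt0 Xx0 DX2 Xu0 (F5 V e1 e2 al HS)).
  assert (AY := affine5 (f 2) 0 (-Fc) 0 0 0 S2 Yt0 ltac:(intros; fx F11; specialize (HF t x y u v);
                  pose proof (DX2 t x y u v); unfold dd in *; cbn [Dks] in *; lra) Yy0 Yu0 (F8 V e1 e2 al HS)).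
  assert (AP1 := affine5 (f 3) 0 0 0 (-Bc) 0 S3 (fun t x y u v => proj1 (Pt0 t x y u v)) P1x0 P1y0
                  ltac:(intros; fx F13; specialize (HF t x y u v); pose proof (Xx0 t x y u v);
                        pose proof (Yy0 t x y u v); pose proof (DT0 t x y u v); unfold dd in *; cbn [Dks] in *; lra)
                  (F9 V e1 e2 al HS)).
  assert (AP2 := affine5 (f 4) 0 0 0 0 (-Bc) S4 (fun t x y u v => proj2 (Pt0 t x y u v)) P2x0 P2y0
                  (F10 V e1 e2 al HS)
                  ltac:(intros; fx F13; specialize (HF t x y u v); pose proof (Xx0 t x y u v);
                        pose proof (Yy0 t x y u v); pose proof (DT0 t x y u v); pose proof (EQuv t x y u v);
                        unfold dd in *; cbn [Dks] in *; lra)).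
  exists [f 1 0 0 0 0 0; f 2 0 0 0 0 0; f 0 0 0 0 0 0; f 3 0 0 0 0 0; f 4 0 0 0 0 0; Fc; Bc].
  split; [reflexivity|]. intros t x y p1 p2. cbn -[Fc Bc].
  cbn in AT, AX, AY, AP1, AP2.
  rewrite (AT t x y p1 p2), (AX t x y p1 p2), (AY t x y p1 p2), (AP1 t x y p1 p2), (AP2 t x y p1 p2). unfold Defs.c0, Defs.c1. repeat split; ring.
Qed.

End Solve.


Definition aff (a0 a1 a2 a3 a4 a5 : R) : R5fun :=
  fun t x y u v => a0 + a1 * t + a2 * x + a3 * y + a4 * u + a5 * v.

Definition sel (k : nat) (a1 a2 a3 a4 a5 : R) : R :=
  match k with 0%nat => a1 | 1%nat => a2 | 2%nat => a3 | 3%nat => a4 | 4%nat => a5 | _ => 0 end.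

Lemma dpl_lin C a x : derivable_pt_lim (fun s => C + a * s) x a.
Proof.
  apply (dpl_eq _ _ (0 + (0 * x + a * 1))).
  - apply dpl_plus'. apply derivable_pt_lim_const.
    apply (dpl_mult' (fun _ => a) (fun s => s)). apply derivable_pt_lim_const. apply derivable_pt_lim_id.
  - ring.
Qed.

Lemma dpl_linf (g : R -> R) C a x : (forall s, g s = C + a * s) -> derivable_pt_lim g x a.
Proof.
  intro H. replace g with (fun s => C + a * s) by (extensionality s; auto). apply dpl_lin.
Qed.

Lemma Dk_aff k a0 a1 a2 a3 a4 a5 :
  Dk k (aff a0 a1 a2 a3 a4 a5) = aff (sel k a1 a2 a3 a4 a5) 0 0 0 0 0.
Proof.
  unfold Dk. destruct (Nat.ltb_spec k 5) as [Hk|Hk].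
  - extensionality t; extensionality x; extensionality y; extensionality u; extensionality v.
    unfold PDv. apply dlim_eq. unfold aff at 2.
    destruct k as [|[|[|[|[|k]]]]]; try lia; cbn [sel vec5 upd lift5 Nat.eqb].
    + apply (dpl_linf _ (a0 + a2*x + a3*y + a4*u + a5*v)). intro; unfold lift5, upd, vec5, aff; simpl; ring.
    + apply (dpl_linf _ (a0 + a1*t + a3*y + a4*u + a5*v)). intro; unfold lift5, upd, vec5, aff; simpl; ring.
    + apply (dpl_linf _ (a0 + a1*t + a2*x + a4*u + a5*v)). intro; unfold lift5, upd, vec5, aff; simpl; ring.
    + apply (dpl_linf _ (a0 + a1*t + a2*x + a3*y + a5*v)). intro; unfold lift5, upd, vec5, aff; simpl; ring.
    + apply (dpl_linf _ (a0 + a1*t + a2*x + a3*y + a4*u)). intro; unfold lift5, upd, vec5, aff; simpl; ring.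
  - replace (sel k a1 a2 a3 a4 a5) with 0 by (destruct k as [|[|[|[|[|k]]]]]; try lia; reflexivity).
    extensionality t; extensionality x; extensionality y; extensionality u; extensionality v.
    unfold c0, aff. ring.
Qed.

Lemma Dks_aff_cons k K a0 a1 a2 a3 a4 a5 :
  exists c, Dks (k :: K) (aff a0 a1 a2 a3 a4 a5) = aff c 0 0 0 0 0.
Proof.
  revert k. induction K as [|k' K IH]; intro k.
  - exists (sel k a1 a2 a3 a4 a5). simpl. apply Dk_aff.
  - destruct (IH k') as [c E]. exists (sel k 0 0 0 0 0).
    change (Dk k (Dks (k' :: K) (aff a0 a1 a2 a3 a4 a5)) = aff (sel k 0 0 0 0 0) 0 0 0 0 0).
    rewrite E, Dk_aff. reflexivity.
Qed.

Lemma Dks_aff2 k1 k2 K a0 a1 a2 a3 a4 a5 :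
  Dks (k1 :: k2 :: K) (aff a0 a1 a2 a3 a4 a5) = aff 0 0 0 0 0 0.
Proof.
  destruct (Dks_aff_cons k2 K a0 a1 a2 a3 a4 a5) as [c E].
  change (Dk k1 (Dks (k2 :: K) (aff a0 a1 a2 a3 a4 a5)) = aff 0 0 0 0 0 0).
  rewrite E, Dk_aff. destruct k1 as [|[|[|[|[|k1]]]]]; reflexivity.
Qed.

Fixpoint substC (rho : nat -> list nat -> option JE) (e : JE) : JE :=
  match e with
  | JC c K => match rho c K with Some e' => e' | None => e end
  | JA e1 e2 => mkA (substC rho e1) (substC rho e2)
  | JM e1 e2 => mkM (substC rho e1) (substC rho e2)
  | _ => e
  end.

Lemma ev_substC env rho e p :
  (forall c K e', rho c K = Some e' -> ev env e' p = ev env (JC c K) p) ->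
  ev env (substC rho e) p = ev env e p.
Proof.
  intros H. induction e; simpl; auto.
  - destruct (rho c K) eqn:E; [apply H; auto | reflexivity].
  - rewrite ev_mkA; simpl; congruence.
  - rewrite ev_mkM; simpl; congruence.
Qed.

Section Conv.
Variables k1 k2 k3 k4 k5 k6 k7 : R.

Definition envA (c : nat) : R5fun :=
  match c with
  | 0 => aff k3 k7 0 0 0 0
  | 1 => aff k1 0 0 k6 0 0
  | 2 => aff k2 0 (-k6) 0 0 0
  | 3 => aff k4 0 0 0 (-k7) 0
  | 4 => aff k5 0 0 0 0 (-k7)
  | _ => aff 0 0 0 0 0 0
  end%nat.

Definition tabA (c k : nat) : option R :=
  match c, k with
  | 0, 0 => Some k7
  | 1, 2 => Some k6
  | 2, 1 => Some (-k6)
  | 3, 3 => Some (-k7)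
  | 4, 4 => Some (-k7)
  | _, _ => None
  end%nat.

Definition rhoA (c : nat) (K : list nat) : option JE :=
  match K with
  | [] => None
  | [k] => Some (match tabA c k with Some r => JR r | None => JZ end)
  | _ => Some JZ
  end.

Lemma rhoA_ok p c K e' : rhoA c K = Some e' -> ev envA e' p = ev envA (JC c K) p.
Proof.
  destruct K as [|k [|k' K]]; intro H; [discriminate| |]; cbn [rhoA] in H; inversion H; subst; clear H;
    cbn [ev].
  - change (Dks [k] (envA c)) with (Dk k (envA c)).
    destruct c as [|[|[|[|[|c]]]]]; cbn [envA]; rewrite Dk_aff;
    destruct k as [|[|[|[|[|k]]]]]; cbn; unfold aff; ring.
  - destruct c as [|[|[|[|[|c]]]]]; cbn [envA]; rewrite Dks_aff2; cbn; unfold aff; ring.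
Qed.

Lemma conv_eq1 e p : ev envA (prVE (EqAE e 1 0)) p = -2 * k7 * ev envA (EqAE e 1 0) p.
Proof.
  rewrite <- (ev_substC envA rhoA) by (intros; apply rhoA_ok; auto).
  let X := fresh "X" in remember (substC rhoA (prVE (EqAE e 1 0))) as X eqn:HX; vm_compute in HX; subst X.
  cbn [ev Dks]. unfold EqAE, omegaDE; cbn [ev mi_add Nat.add]. ring.
Qed.

Lemma conv_eq2 e al p : ev envA (prVE (EqAE e al 1)) p = -2 * k7 * ev envA (EqAE e al 1) p.
Proof.
  rewrite <- (ev_substC envA rhoA) by (intros; apply rhoA_ok; auto).
  let X := fresh "X" in remember (substC rhoA (prVE (EqAE e al 1))) as X eqn:HX; vm_compute in HX; subst X.
  cbn [ev Dks]. unfold EqAE, omegaDE; cbn [ev mi_add Nat.add]. ring.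
Qed.

End Conv.


Lemma XsLinIndep_ok : XsLinIndep.
Proof.
  intros c [Hlen H].
  destruct c as [|k1 [|k2 [|k3 [|k4 [|k5 [|k6 [|k7 [|k8 c]]]]]]]]; try discriminate.
  pose proof (H 0 0 0 0 0) as A0. pose proof (H 1 1 1 1 1) as A1.
  cbn in A0, A1. unfold Defs.c0, Defs.c1 in A0, A1.
  destruct A0 as (T0 & X0 & Y0 & P0 & Q0). destruct A1 as (T1 & X1' & Y1 & P1 & Q1).
  repeat constructor; lra.
Qed.

Lemma lincomb_env V c : IsLinComb V c ->
  exists k1 k2 k3 k4 k5 k6 k7, envV V = envA k1 k2 k3 k4 k5 k6 k7.
Proof.
  intros [Hlen H].
  destruct c as [|k1 [|k2 [|k3 [|k4 [|k5 [|k6 [|k7 [|k8 c]]]]]]]]; try discriminate.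
  exists k1, k2, k3, k4, k5, k6, k7.
  extensionality cc.
  extensionality t; extensionality x; extensionality y; extensionality u; extensionality v.
  destruct (H t x y u v) as (T0 & X0 & Y0 & P0 & Q0). cbn in T0, X0, Y0, P0, Q0.
  unfold Defs.c0, Defs.c1 in *.
  destruct cc as [|[|[|[|[|cc]]]]]; cbn [envV envA]; unfold aff.
  - rewrite T0; ring.
  - rewrite X0; ring.
  - rewrite Y0; ring.
  - rewrite P0; ring.
  - rewrite Q0; ring.
  - unfold Defs.c0; ring.
Qed.

Theorem mainTheorem1 (rho1 rho2 H1 H2 g l : R)
  (hrho1 : 0 < rho1) (hrho2 : 0 < rho2) (hrho : rho1 < rho2)
  (hH1 : 0 < H1) (hH2 : 0 < H2) (hg : 0 < g) (hl : l <> 0) :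
  (forall V : VF, SmoothVF V ->
     (IsLieSym rho1 rho2 H1 H2 g l V <-> InSpanX V))
  /\ XsLinIndep.
Proof.
  split; [|exact XsLinIndep_ok].
  intros V HV. split.
  - intros HL.
    assert (Hl2 : 0 < l ^ 2) by (rewrite <- Rsqr_pow2; apply Rsqr_pos_lt; auto).
    apply (InSpan_final V (epsi rho1 rho2 g l rho1 H1) (epsi rho1 rho2 g l rho2 H2) (rho1 / rho2) HV).
    + intros p Hq1 Hq2. specialize (HL p). unfold Eq1, Eq2 in HL.
      rewrite <- !(ev_EqAE (envV V)) in HL. rewrite <- !ev_prVE in HL by auto. apply HL; auto.
    + unfold epsi. apply Rgt_not_eq. unfold Rdiv. apply Rmult_lt_0_compat.
      * apply Rmult_lt_0_compat; lra.
      * apply Rinv_0_lt_compat. repeat apply Rmult_lt_0_compat; lra.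
    + unfold epsi. apply Rgt_not_eq. unfold Rdiv. apply Rmult_lt_0_compat.
      * apply Rmult_lt_0_compat; lra.
      * apply Rinv_0_lt_compat. repeat apply Rmult_lt_0_compat; lra.
    + intro E. assert (rho1 = rho2); [|lra].
      replace rho1 with (rho1 / rho2 * rho2) by (field; lra). rewrite E. ring.
  - intros [c HLC]. destruct (lincomb_env V c HLC) as (k1 & k2 & k3 & k4 & k5 & k6 & k7 & Henv).
    intros p Hq1 Hq2. unfold Eq1, Eq2 in *.
    rewrite <- !(ev_EqAE (envV V)) in *. rewrite <- !ev_prVE by auto.
    rewrite Henv in *. rewrite conv_eq1, conv_eq2, Hq1, Hq2. split; ring.
Qed.
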